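(* Define integer matrices $(a(i,j))_{i,j\ge1}$ and $(b(i,j))_{i,j\ge1}$ as follows. The first three rows are (entries listed for $j=1,2,\dots$; all further entries in these rows are $0$): \begin{itemize} \item $a(1,\cdot)=(10,-36,27)$; $a(2,\cdot)=(-8,306,-2160,5508,-5832,2187)$; $a(3,\cdot)=(1,-360,10566,-99144,423549,-944784,1141614,-708588,177147)$; \item $b(1,\cdot)=(-9,252,-891,729)$; $b(2,\cdot)=(1,-378,8613,-54675,138510,-150903,59049)$; $b(3,\cdot)=(0,147,-14553,312255,-2617839,10764414,-23914845,29288304,-18600435,4782969)$. \end{itemize} For $i\ge4$ and $j\ge1$, both $m=a$ and $m=b$ satisfy $$m(i,j)=30m(i-1,j-1)-108m(i-1,j-2)+81m(i-1,j-3)-12m(i-2,j-1)+9m(i-2,j-2)+m(i-3,j-1),$$ with $m(i,j)=0$ whenever $j\le0$. Then for all $i,j\ge1$, $$\pi(a(i,j))\ge\left\lfloor\frac{3j-i-1}{2}\right\rfloor,\qquad \pi(b(i,j))\ge\left\lfloor\frac{3j-i}{2}\right\rfloor.$$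
   Context: For an integer $n$, $\pi(n)$ denotes the $3$-adic order of $n$, with the convention $\pi(0)=\infty$. $\lfloor x\rfloor$ is the largest integer not exceeding $x$. *)

(* Defs.v *)
From Stdlib Require Import ZArith.
From mathcomp Require Import all_boot all_order all_algebra.
From mathcomp Require Import ssrZ.
Set Implicit Arguments. Unset Strict Implicit. Unset Printing Implicit Defensive.
Import Order.TTheory GRing.Theory Num.Theory.
Local Open Scope ring_scope.

(* Row given by a finite list of entries for j = 1, 2, ...; entry at j = 0
   (i.e. j <= 0) and beyond the list is 0. *)
(* Entries are written as binary integers Z (to avoid unary literals) and
   converted to int by int_of_Z. *)
Definition row_of (s : seq Z) (j : nat) : int :=
  if j is j'.+1 then int_of_Z (nth Z0 s j') else 0.

(* The matrix m(i,j) (i,j >= 1, i.e. nat i, j with index 0 meaning "<= 0")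
   with rows 1,2,3 given and the recurrence for i >= 4:
   m(i,j) = 30m(i-1,j-1) - 108m(i-1,j-2) + 81m(i-1,j-3) - 12m(i-2,j-1)
            + 9m(i-2,j-2) + m(i-3,j-1), and m(i,j) = 0 for j <= 0. *)
Fixpoint mrec (r1 r2 r3 : nat -> int) (i j : nat) {struct i} : int :=
  match i with
  | 0 => 0
  | 1 => r1 j
  | 2 => r2 j
  | 3 => r3 j
  | S ((S ((S ((S _) as p3)) as p2)) as p1) =>
      if j is 0 then 0 else
      30 * mrec r1 r2 r3 p1 (j - 1) - 108 * mrec r1 r2 r3 p1 (j - 2)
      + 81 * mrec r1 r2 r3 p1 (j - 3) - 12 * mrec r1 r2 r3 p2 (j - 1)
      + 9 * mrec r1 r2 r3 p2 (j - 2) + mrec r1 r2 r3 p3 (j - 1)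
  end.

Section Rows.
Local Open Scope Z_scope.
Definition row_a1 : seq Z := [:: 10; -36; 27].
Definition row_a2 : seq Z := [:: -8; 306; -2160; 5508; -5832; 2187].
Definition row_a3 : seq Z := [:: 1; -360; 10566; -99144; 423549; -944784; 1141614; -708588; 177147].
Definition row_b1 : seq Z := [:: -9; 252; -891; 729].
Definition row_b2 : seq Z := [:: 1; -378; 8613; -54675; 138510; -150903; 59049].
Definition row_b3 : seq Z := [:: 0; 147; -14553; 312255; -2617839; 10764414; -23914845;
                   29288304; -18600435; 4782969].
End Rows.

Definition a_mat : nat -> nat -> int :=
  mrec (row_of row_a1)
       (row_of row_a2)
       (row_of row_a3).

Definition b_mat : nat -> nat -> int :=
  mrec (row_of row_b1)
       (row_of row_b2)
       (row_of row_b3).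

(* 3-adic order pi(n); None encodes pi(0) = infinity. *)
Definition pi3 (n : int) : option nat :=
  if n == 0 then None else Some (logn 3 `|n|%N).

Definition pi3_ge (n : int) (k : int) : Prop :=
  match pi3 n with None => True | Some v => k <= v%:Z end.

(* Main.v *)
Require Import Defs.
From Stdlib Require Import ZArith Lia.
From mathcomp Require Import all_boot all_order all_algebra.
From mathcomp Require Import ssrZ zify.
Import Order.TTheory GRing.Theory Num.Theory.
Local Open Scope ring_scope.

Section ZS.
Local Open Scope Z_scope.
Lemma dvd_ofZ (z : Z) (e : nat) : Z.modulo z (3 ^ Z.of_nat e) = 0 ->
  int_of_Z z \in dvdz ((3 : int) ^+ e)%R.
Proof.
move=> H; apply/dvdzP; exists (int_of_Z (z / 3 ^ Z.of_nat e)).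
apply: (can_inj Z_of_intK).
rewrite rmorphM rmorphXn /= !int_of_ZK.
have : (3 ^ Z.of_nat e <> 0) by apply: Z.pow_nonzero; lia.
move: (Z.div_mod z (3 ^ Z.of_nat e)) => D Hn.
rewrite {1}D // H Z.add_0_r Z.mul_comm.
zify; ring.
Qed.

Fixpoint chk (s : seq Z) (j r off : Z) : bool :=
  match s with
  | [::] => true
  | z :: s' => Z.eqb (Z.modulo z (3 ^ Z.of_nat (Z.to_nat ((3 * j - r - off) / 2)))) 0
               && chk s' (j + 1) r off
  end.
End ZS.

Lemma chk_ok {s j0 r off} : chk s j0 r off ->
  forall (n k : nat), (2 * k%:Z <= 3 * (int_of_Z j0 + n%:Z) - int_of_Z r - int_of_Z off)%R ->
  int_of_Z (nth Z0 s n) \in dvdz ((3 : int) ^+ k)%R.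
Proof.
elim: s j0 => [|z s IH] j0.
  by move=> _ n k _; rewrite nth_nil; apply: dvdz0.
move=> /andP[/Z.eqb_spec H1 H2] [|n] k Hk.
  rewrite /=. apply: (dvdz_trans _ (dvd_ofZ _ _ H1)).
  apply: dvdz_exp2l.
  have : (2 * Z.of_nat k <= 3 * j0 - r - off)%Z by lia.
  move=> h; Z.div_mod_to_equations; lia.
apply: (IH _ H2); lia.
Qed.

Lemma row_ok s r off : chk s 1 r off ->
  forall (j k : nat), (2 * k%:Z <= 3 * j%:Z - int_of_Z r - int_of_Z off)%R ->
  row_of s j \in dvdz ((3 : int) ^+ k)%R.
Proof.
move=> H [|j] k Hk /=; first exact: dvdz0.
apply: (chk_ok H); rewrite -/(int_of_Z 1); lia.
Qed.

Lemma term (x c : int) (e : nat) (B : int) :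
  (forall k : nat, 2 * k%:Z <= B -> (3 ^+ k %| x)%Z) -> (3 ^+ e %| c)%Z ->
  forall k : nat, 2 * k%:Z <= B + 2 * e%:Z -> (3 ^+ k %| c * x)%Z.
Proof.
move=> Hx Hc k Hk.
case: (leqP k e) => hke.
  apply: dvdz_mulr; exact: dvdz_trans (dvdz_exp2l _ hke) Hc.
have -> : k = (e + (k - e))%N by lia.
rewrite exprD; apply: dvdz_mul => //; apply: Hx; lia.
Qed.

Section Main.
Variables (r1 r2 r3 : nat -> int) (off : int).
Hypotheses (h1 : r1 0 = 0) (h2 : r2 0 = 0) (h3 : r3 0 = 0).
Let m := mrec r1 r2 r3.

Definition Pm (i : nat) := forall j k : nat,
  2 * k%:Z <= 3 * j%:Z - i%:Z - off -> (3 ^+ k %| m i j)%Z.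

Lemma m_j0 i : m i 0 = 0.
Proof. by case: i => [|[|[|[|i]]]]. Qed.

Lemma m_rec n j : m n.+4 j.+1 =
  30 * m n.+3 (j.+1 - 1) - 108 * m n.+3 (j.+1 - 2) + 81 * m n.+3 (j.+1 - 3)
  - 12 * m n.+2 (j.+1 - 1) + 9 * m n.+2 (j.+1 - 2) + m n.+1 (j.+1 - 1).
Proof. by []. Qed.

Lemma shift i : Pm i -> forall j t k : nat,
  2 * k%:Z <= 3 * j%:Z - 3 * t%:Z - i%:Z - off -> (3 ^+ k %| m i (j - t))%Z.
Proof.
move=> H j t k Hk; case: (leqP t j) => htj.
  apply: H; lia.
have -> : (j - t = 0)%N by lia.
by rewrite m_j0 dvdz0.
Qed.

Lemma main_ind : Pm 1 -> Pm 2 -> Pm 3 -> forall i, (1 <= i)%N -> Pm i.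
Proof.
move=> P1 P2 P3.
suff: forall n, Pm n.+1 /\ Pm n.+2 /\ Pm n.+3.
  by move=> H [|i] // _; case: (H i).
elim=> [|n [Q1 [Q2 Q3]]]; first by [].
split=> //; split=> //.
move=> [|j] k Hk; first by rewrite m_j0 dvdz0.
rewrite m_rec.
have Hc e c : (3 ^+ e %| c)%Z -> forall (t : nat) i, Pm i ->
  forall k : nat, 2 * k%:Z <= 3 * j.+1%:Z - 3 * t%:Z - i%:Z - off + 2 * e%:Z ->
  (3 ^+ k %| c * m i (j.+1 - t))%Z.
  move=> hc t i Hi; apply: term hc => k' hk'; exact: shift.
rewrite -!mulNr.
repeat apply: rpredD.
- apply: (Hc 1%N) => //; lia.
- apply: (Hc 3%N) => //; lia.
- apply: (Hc 4%N) => //; lia.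
- apply: (Hc 1%N) => //; lia.
- apply: (Hc 2%N) => //; lia.
- rewrite -[m _ _]mul1r; apply: (Hc 0%N) => //; lia.
Qed.
End Main.

Lemma pi3_from (x B : int) :
  (forall k : nat, 2 * k%:Z <= B -> (3 ^+ k %| x)%Z) -> pi3_ge x ((B %/ 2)%Z).
Proof.
move=> H; rewrite /pi3_ge /pi3; case: eqP => // /eqP hx.
case: (lerP ((B %/ 2)%Z) 0) => hB; first lia.
have := H `|(B %/ 2)%Z|%N; rewrite dvdzE abszX.
have -> : `|3%:Z|%N = 3%N by [].
rewrite pfactor_dvdn //; last by rewrite absz_gt0.
set L := logn 3 _.
move=> h; have := h ltac:(lia); lia.
Qed.

Lemma a_ok : forall i, (1 <= i)%N -> Pm (row_of row_a1) (row_of row_a2) (row_of row_a3) 1 i.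
Proof.
apply: main_ind => //; move=> j k Hk.
- apply: (@row_ok _ 1 1); [by vm_compute | lia].
- apply: (@row_ok _ 2 1); [by vm_compute | lia].
- apply: (@row_ok _ 3 1); [by vm_compute | lia].
Qed.

Lemma b_ok : forall i, (1 <= i)%N -> Pm (row_of row_b1) (row_of row_b2) (row_of row_b3) 0 i.
Proof.
apply: main_ind => //; move=> j k Hk.
- apply: (@row_ok _ 1 0); [by vm_compute | lia].
- apply: (@row_ok _ 2 0); [by vm_compute | lia].
- apply: (@row_ok _ 3 0); [by vm_compute | lia].
Qed.

Theorem theorem3p1 :
  forall i j : nat, (1 <= i)%N -> (1 <= j)%N ->
    pi3_ge (a_mat i j) ((3 * j%:Z - i%:Z - 1) %/ 2)%Z /\
    pi3_ge (b_mat i j) ((3 * j%:Z - i%:Z) %/ 2)%Z.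
Proof.
move=> i j hi _; split; apply: pi3_from => k hk.
- apply: (a_ok _ hi j k); lia.
- apply: (b_ok _ hi j k); lia.
Qed.
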